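(* Let $D$ be a series-parallel digraph with a fixed binary decomposition tree, and let $\boldsymbol{P}^*$ be an optimal path profile for \textsc{Min-Max Disjoint Paths} on $D$ with $k$ paths. Let $\ast\in\{\circ,\parallel\}$ and let $D'=D^{(1)}\ast D^{(2)}\sqsubseteq D$, where $D^{(1)},D^{(2)}$ are the graphs of the two children of the tree vertex of $D'$. If $\boldsymbol{Q}$ is a path profile in $D^{(1)}$ and $\boldsymbol{R}$ is a path profile in $D^{(2)}$ that are both consistent with $\boldsymbol{P}^*$ and balanced (in $D^{(1)}$, resp. $D^{(2)}$), then their greedy composition $\boldsymbol{P}=\boldsymbol{Q}\ast\boldsymbol{R}$ is a path profile in $D'$ that is consistent with $\boldsymbol{P}^*$ and balanced in $D'$.
   Context: A series-parallel digraph is a single arc, a series composition $D'\circ D''$ (sink of $D'$ identified with source of $D''$) or a parallel composition $D'\parallel D''$ (sources identified, sinks identified) of series-parallel digraphs; a binary decomposition tree has leaves = arcs and internal vertices labeled $S$/$P$ representing series/parallel composition of their children's graphs. $D'\sqsubseteq D$ denotes the subgraph represented by some vertex of the fixed tree, with source $s'$ and sink $t'$. \textsc{Min-Max Disjoint Paths} on $D$ with travel times $\tau\ge0$: find $k$ pairwise arc-disjoint $s$-$t$-paths minimizing the maximum length. A path profile in $D'$ is a tuple of pairwise arc-disjoint $s'$-$t'$-paths in $D'$; for an $s$-$t$-path $P$ of $D$ using an arc of $D'$, $P\cap A(D')$ is an $s'$-$t'$-path. Notation: $\tau(P,D')=\sum_{a\in P\cap A(D')}\tau_a$, $C_{\max}(\boldsymbol{P},D')=\max_{P\in\boldsymbol{P}}\tau(P,D')$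 (with $0$ for an empty profile), $\theta(\boldsymbol{P},D')=\sum_{P\in\boldsymbol{P}}\tau(P,D')$. A profile $\boldsymbol{P}$ is consistent with $\boldsymbol{P}^*$ in $D'$ if $\boldsymbol{P}$ and $\boldsymbol{P}^*$ use the same number of paths in $D'$ and $\theta(\boldsymbol{P},D')\le\theta(\boldsymbol{P}^*,D')$. If $k'$ paths of $\boldsymbol{P}$ traverse $D'$ with lengths (in $D'$) $p_1\ge\dots\ge p_{k'}$, then $\boldsymbol{P}$ is balanced in $D'$ if $\frac1i\sum_{j=1}^ip_j-p_{i+1}\le C_{\max}(\boldsymbol{P}^*,D')$ for all $i\in[k'-1]$. Greedy composition: for series composition with $\boldsymbol{Q},\boldsymbol{R}$ having the same number of paths, concatenate the longest path of $\boldsymbol{Q}$ with the shortest of $\boldsymbol{R}$, the second-longest with the second-shortest, and so on (ties broken arbitrarily); for parallel composition, take the union of the paths of $\boldsymbol{Q}$ and $\boldsymbol{R}$. *)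

(* Defs.v *)
From HB Require Import structures.
From mathcomp Require Import all_boot all_order all_algebra.
Set Implicit Arguments. Unset Strict Implicit. Unset Printing Implicit Defensive.
Import Order.TTheory GRing.Theory Num.Theory.

Inductive sptree := Arc | Ser of sptree & sptree | Par of sptree & sptree.

Fixpoint nleaves (T : sptree) : nat :=
  match T with Arc => 1 | Ser l r | Par l r => nleaves l + nleaves r end.

(* number of internal vertices created by series compositions *)
Fixpoint nser (T : sptree) : nat :=
  match T with Arc => 0 | Ser l r => (nser l + nser r).+1
             | Par l r => nser l + nser r end.

(* An sparc is (id, (tail, head)); sparc ids are the leaf numbers (left to
   right), vertices are natural numbers. *)
Definition sparc := (nat * (nat * nat))%type.
Definition arc_id (a : sparc) : nat := a.1.
Definition arc_tail (a : sparc) : nat := a.2.1.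
Definition arc_head (a : sparc) : nat := a.2.2.

(* [build T s t fr off]: the sparc list of the series-parallel digraph
   represented by T, with source s, sink t, fresh internal vertices
   numbered from fr and sparc ids numbered from off.  Series composition
   identifies the sink of the left part with the source of the right
   part (new vertex fr); parallel composition identifies sources and
   sinks. *)
Fixpoint build (T : sptree) (s t fr off : nat) : seq sparc :=
  match T with
  | Arc => [:: (off, (s, t))]
  | Ser l r => build l s fr fr.+1 off ++
               build r fr t (fr.+1 + nser l) (off + nleaves l)
  | Par l r => build l s t fr off ++
               build r s t (fr + nser l) (off + nleaves l)
  end.

(* A subgraph represented by a vertex of the fixed tree, together with
   its position (source, sink, vertex/sparc numbering) inside D. *)
Record spg := SPG { sp_tree : sptree; sp_src : nat; sp_snk : nat;
                    sp_fr : nat; sp_off : nat }.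

Definition arcs (G : spg) : seq sparc :=
  build (sp_tree G) (sp_src G) (sp_snk G) (sp_fr G) (sp_off G).

Definition whole (T : sptree) : spg := SPG T 0 1 2 0.

(* The two children of a tree vertex (meaningless for a leaf). *)
Definition lchild (G : spg) : spg :=
  match sp_tree G with
  | Arc => G
  | Ser l _ => SPG l (sp_src G) (sp_fr G) (sp_fr G).+1 (sp_off G)
  | Par l _ => SPG l (sp_src G) (sp_snk G) (sp_fr G) (sp_off G)
  end.
Definition rchild (G : spg) : spg :=
  match sp_tree G with
  | Arc => G
  | Ser l r => SPG r (sp_fr G) (sp_snk G) ((sp_fr G).+1 + nser l)
                   (sp_off G + nleaves l)
  | Par l r => SPG r (sp_src G) (sp_snk G) (sp_fr G + nser l)
                   (sp_off G + nleaves l)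
  end.
Definition is_leaf (G : spg) : bool :=
  if sp_tree G is Arc then true else false.

(* D' ⊑ D : D' is represented by some vertex of the tree of D. *)
Inductive is_node (D : spg) : spg -> Prop :=
  | node_root : is_node D D
  | node_l G : is_node D G -> ~~ is_leaf G -> is_node D (lchild G)
  | node_r G : is_node D G -> ~~ is_leaf G -> is_node D (rchild G).

Definition is_path (A : seq sparc) (u v : nat) (p : seq sparc) : bool :=
  match p with
  | [::] => false
  | a :: p' =>
      [&& arc_tail a == u, arc_head (last a p') == v,
          path (fun x y => arc_head x == arc_tail y) a p',
          all (fun b => b \in A) p & uniq (u :: map arc_head p)]
  end.

Definition profile (G : spg) (ps : seq (seq sparc)) : bool :=
  all (is_path (arcs G) (sp_src G) (sp_snk G)) ps &&
  pairwise (fun p q => ~~ has (fun a => a \in q) p) ps.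

Definition uses (G : spg) (p : seq sparc) : bool :=
  has (fun a => a \in arcs G) p.

Local Open Scope ring_scope.

Section Lengths.
Variables (R : realFieldType) (tau : nat -> R).

Definition tauP (G : spg) (p : seq sparc) : R :=
  \sum_(a <- p | a \in arcs G) tau (arc_id a).

(* C_max(P, D') (0 for the empty profile) *)
Definition Cmax (G : spg) (ps : seq (seq sparc)) : R :=
  \big[Num.max/0]_(p <- ps) tauP G p.

Definition theta (G : spg) (ps : seq (seq sparc)) : R :=
  \sum_(p <- ps) tauP G p.

Definition optimal (D : spg) (k : nat) (Ps : seq (seq sparc)) : Prop :=
  [/\ profile D Ps, size Ps = k &
      forall P, profile D P -> size P = k -> Cmax D Ps <= Cmax D P].

Definition consistent (G : spg) (Ps P : seq (seq sparc)) : Prop :=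
  count (uses G) P = count (uses G) Ps /\ theta G P <= theta G Ps.

Definition sorted_lengths (G : spg) (P : seq (seq sparc)) : seq R :=
  sort (fun x y => y <= x) [seq tauP G p | p <- P & uses G p].

Definition balanced (G : spg) (Ps P : seq (seq sparc)) : Prop :=
  let L := sorted_lengths G P in
  forall i : nat, (0 < i < size L)%N ->
    (i%:R)^-1 * (\sum_(j < i) L`_j) - L`_i <= Cmax G Ps.

(* P is a greedy composition of Q (in lchild G) and R (in rchild G),
   for any tie-breaking *)
Definition greedy_comp (G : spg) (Q Rr P : seq (seq sparc)) : Prop :=
  match sp_tree G with
  | Arc => False
  | Ser _ _ =>
      size Q = size Rr /\
      exists Q' R', [/\ perm_eq Q Q', perm_eq Rr R',
        sorted (fun p q => tauP (lchild G) q <= tauP (lchild G) p) Q',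
        sorted (fun p q => tauP (rchild G) p <= tauP (rchild G) q) R' &
        P = [seq x.1 ++ x.2 | x <- zip Q' R']]
  | Par _ _ => P = Q ++ Rr
  end.

End Lengths.

(* Main.v *)
Require Import Defs.
From HB Require Import structures.
From mathcomp Require Import all_boot all_order all_algebra.
Import Order.TTheory GRing.Theory Num.Theory.
Local Open Scope ring_scope.
From mathcomp Require Import zify ring lra.

Section GraphPart.
Local Open Scope nat_scope.
Set Implicit Arguments. Unset Strict Implicit.

Lemma build_range T s t fr off a : a \in build T s t fr off ->
  [/\ off <= arc_id a < off + nleaves T,
      arc_tail a = s \/ fr <= arc_tail a < fr + nser T &
      arc_head a = t \/ fr <= arc_head a < fr + nser T].
Proof.
elim: T s t fr off => [|l IHl r IHr|l IHl r IHr] s t fr off /=.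
- by rewrite inE => /eqP -> /=; split; [lia|left|left].
- rewrite mem_cat => /orP [/IHl|/IHr] [H1 H2 H3]; split; lia.
- rewrite mem_cat => /orP [/IHl|/IHr] [H1 H2 H3]; split; lia.
Qed.

Definition inv T (G : spg) := [/\ sp_src G < sp_fr G, sp_snk G < sp_fr G,
  sp_src G != sp_snk G, 2 <= sp_fr G & sp_off G + nleaves (sp_tree G) <= nleaves T].

Lemma node_inv T G : is_node (whole T) G -> inv T G.
Proof.
elim=> [|{}G HG [H1 H2 H3 H4 H5] Hnl|{}G HG [H1 H2 H3 H4 H5] Hnl].
- by rewrite /inv /=; split => //; lia.
- case: G H1 H2 H3 H4 H5 Hnl {HG} => [[|l r|l r] s t fr off] //= H1 H2 H3 H4 H5 _;
  rewrite /inv /=; split => //; try lia; apply/eqP; move/eqP: H3; lia.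
- case: G H1 H2 H3 H4 H5 Hnl {HG} => [[|l r|l r] s t fr off] //= H1 H2 H3 H4 H5 _;
  rewrite /inv /=; split => //; try lia; apply/eqP; move/eqP: H3; lia.
Qed.

Definition interior (G : spg) (v : nat) := sp_fr G <= v < sp_fr G + nser (sp_tree G).

Lemma node_interior T G : is_node (whole T) G -> forall c, c \in arcs (whole T) ->
  interior G (arc_tail c) || interior G (arc_head c) -> c \in arcs G.
Proof.
elim=> [//|{}G HG IH Hnl|{}G HG IH Hnl] c cA Hc;
  have [H1 H2 H3 H4 H5] := node_inv HG;
  case: G HG IH Hnl H1 H2 H3 H4 H5 Hc => [[|l r|l r] s t fr off] //= HG IH _ H1 H2 H3 H4 H5 Hc;
  (have := IH c cA; rewrite /interior /= in Hc *; move=> /(_ ltac:(lia)));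
  rewrite /arcs /= mem_cat => /orP [] // /build_range [_ Ht Hh]; move/eqP: H3; lia.
Qed.

Definition chain := fun x y : sparc => arc_head x == arc_tail y.

Lemma walk_fwd (A : seq sparc) (S Tp : pred sparc) (X : pred nat) v a p :
  (forall c, c \in A -> X (arc_tail c) -> S c || Tp c) ->
  (forall c, S c -> X (arc_head c)) -> ~~ X v ->
  path chain a p -> all (fun b => b \in A) p ->
  arc_head (last a p) = v -> has S (a :: p) -> has Tp (a :: p).
Proof.
move=> H1 H2 Hv; elim: p a => [|b p IH] a.
  by move=> _ _ /= Hl; rewrite orbF => /H2; rewrite Hl (negbTE Hv).
move=> /andP [/eqP Hab Hp] /andP [bA HA] Hl /orP [Sa|Hs]; apply/orP; right.
  have := H1 b bA; rewrite -Hab (H2 _ Sa) => /(_ isT) /orP [Sb|Tb].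
    by apply: IH => //; apply/orP; left.
  by apply/orP; left.
exact: IH.
Qed.

Lemma walk_bwd (A : seq sparc) (S Tp : pred sparc) (X : pred nat) u a p :
  (forall c, c \in A -> X (arc_head c) -> S c || Tp c) ->
  (forall c, S c -> X (arc_tail c)) -> ~~ X u ->
  path chain a p -> all (fun b => b \in A) (a :: p) ->
  arc_tail a = u -> has S (a :: p) -> has Tp (a :: p).
Proof.
move=> H1 H2 Hu.
suff H : forall a p, path chain a p -> all (fun b => b \in A) (a :: p) ->
   has S (a :: p) -> has Tp (a :: p) || S a.
  move=> Hp HA Ha Hs; have /orP [//|/H2] := H a p Hp HA Hs.
  by rewrite Ha (negbTE Hu).
move=> {}a {}p; elim: p a => [|b p IH] a.
  by move=> _ _ /=; rewrite !orbF => ->; rewrite orbT.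
move=> /andP [/eqP Hab Hp] /andP [aA /andP [bA HA]] /orP [Sa|Hs].
  by rewrite Sa orbT.
have /orP [Tb|Sb] := IH b Hp (introT andP (conj bA HA)) Hs.
  by apply/orP; left; apply/orP; right.
have := H1 a aA; rewrite Hab (H2 _ Sb) => /(_ isT) /orP [->|Ta]; first by rewrite orbT.
by apply/orP; left; apply/orP; left.
Qed.

Lemma tails_belast a p : path chain a p ->
  map arc_tail (a :: p) = belast (arc_tail a) (map arc_head (a :: p)).
Proof.
elim: p a => [|b p IH] a //= /andP [/eqP Hab Hp].
by have := IH b Hp; rewrite /= => ->; rewrite Hab.
Qed.

Lemma is_path_uniq_tails A u v p : is_path A u v p -> uniq (map arc_tail p).
Proof.
case: p => [//|a p] /and5P [/eqP Ha _ Hp _ Hu].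
rewrite (tails_belast Hp) Ha; move: Hu; rewrite lastI rcons_uniq => /andP [_ ->] //.
Qed.

Lemma uniq_map_inj (T1 T2 : eqType) (f : T1 -> T2) (s : seq T1) x y :
  uniq (map f s) -> x \in s -> y \in s -> f x = f y -> x = y.
Proof.
elim: s => [//|z s IH] /= /andP [Hz Hu].
rewrite !inE => /orP [/eqP ->|xs] /orP [/eqP ->|ys] // E.
- by move: Hz; rewrite E map_f.
- by move: Hz; rewrite -E map_f.
- exact: IH.
Qed.

Lemma is_path_arcs A u v p : is_path A u v p -> all (fun b => b \in A) p.
Proof. by case: p => [//|a p] /and5P []. Qed.

Lemma is_path_nil A u v : ~~ is_path A u v [::].
Proof. by []. Qed.

Lemma is_path_uniq A u v p : is_path A u v p -> uniq p.
Proof. by move=> /is_path_uniq_tails /map_uniq. Qed.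

Lemma is_path_sub A B u v p : {subset A <= B} -> is_path A u v p -> is_path B u v p.
Proof.
move=> sAB; case: p => [//|a p] /and5P [H1 H2 H3 H4 H5]; rewrite /is_path H1 H2 H3 H5 /= andbT.
by apply: sub_all H4 => b /sAB.
Qed.

Lemma is_path_cat A B u w v q r : is_path A u w q -> is_path B w v r ->
  (forall x, x \in u :: map arc_head q -> x \in map arc_head r -> False) ->
  is_path (A ++ B) u v (q ++ r).
Proof.
case: q => [//|a q]; case: r => [//|b r].
move=> /and5P [Ha Hla Hq Aq Uq] /and5P [Hb Hlb Hr Br Ur] Hdis.
rewrite cat_cons /is_path; apply/and5P; split.
- exact: Ha.
- by rewrite last_cat.
- by rewrite cat_path /= Hq (eqP Hla) (eqP Hb) eqxx Hr.
- rewrite -cat_cons all_cat; apply/andP; split.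
  + by apply: sub_all Aq => c; rewrite mem_cat => ->.
  + by apply: sub_all Br => c; rewrite mem_cat => ->; rewrite orbT.
rewrite -cat_cons map_cat -cat_cons cat_uniq Uq.
have Ur' : uniq (map arc_head (b :: r)) by case/andP: Ur.
rewrite Ur' andbT.
apply/hasPn => x xr; apply/negP => xq; exact: (Hdis x xq xr).
Qed.

Lemma reach_src T G p : is_node (whole T) G -> is_path (arcs (whole T)) 0 1 p ->
  uses G p -> exists2 c, c \in p & (c \in arcs G) && (arc_tail c == sp_src G).
Proof.
move=> HG; have [H1 H2 H3 H4 H5] := node_inv HG.
case: p => [//|a p] Hpath; have := Hpath; move=> /and5P [Ha Hl Hp HA Hu] Hus.
have /hasP [c0 c0p c0G] := Hus.
case E: (arc_tail c0 == sp_src G); first by exists c0; rewrite ?c0G ?E.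
have : has (fun c => (c \in arcs G) && (arc_tail c == sp_src G)) (a :: p).
  apply: (@walk_bwd (arcs (whole T)) (fun c => (c \in arcs G) && (arc_tail c != sp_src G)) _
     (interior G) 0) => //.
  - move=> c cA Hc; have cG := node_interior HG cA (introT orP (or_intror Hc)).
    by rewrite cG /=; case: (arc_tail c == sp_src G).
  - move=> c /andP [cG Hne]; move: cG; rewrite /arcs => /build_range [_ Ht _].
    by rewrite /interior; case: Ht => [/eqP|]; [rewrite (negbTE Hne)|].
  - by rewrite /interior; lia.
  - exact/eqP.
  - by apply/hasP; exists c0 => //; rewrite c0G E.
by move=> /hasP [c cp Hc]; exists c.
Qed.

Lemma par_uses T l r s t fr off p :
  is_node (whole T) (SPG (Par l r) s t fr off) -> is_path (arcs (whole T)) 0 1 p ->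
  ~~ (uses (lchild (SPG (Par l r) s t fr off)) p && uses (rchild (SPG (Par l r) s t fr off)) p).
Proof.
set D' := SPG _ _ _ _ _ => HD Hpath; apply/negP => /andP [u1 u2].
have N1 : is_node (whole T) (lchild D') by apply: node_l.
have N2 : is_node (whole T) (rchild D') by apply: node_r.
have [c1 c1p /andP [c1A /eqP c1s]] := reach_src N1 Hpath u1.
have [c2 c2p /andP [c2A /eqP c2s]] := reach_src N2 Hpath u2.
have E := uniq_map_inj (is_path_uniq_tails Hpath) c1p c2p (etrans c1s (esym c2s)).
move: c1A c2A; rewrite E /lchild /rchild /arcs /= => /build_range [Hi1 _ _] /build_range [Hi2 _ _].
lia.
Qed.

Lemma ser_uses T l r s t fr off p :
  is_node (whole T) (SPG (Ser l r) s t fr off) -> is_path (arcs (whole T)) 0 1 p ->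
  uses (lchild (SPG (Ser l r) s t fr off)) p = uses (rchild (SPG (Ser l r) s t fr off)) p.
Proof.
set D' := SPG _ _ _ _ _ => HD Hpath.
have [H1 H2 H3 H4 H5] := node_inv HD.
rewrite /D' /= in H1 H2 H3 H4 H5.
case: p Hpath => [//|a p] Hpath; have := Hpath; move=> /and5P [Ha Hl Hp HA Hu].
have Hint : forall c, c \in arcs (whole T) -> interior D' (arc_tail c) || interior D' (arc_head c) ->
   (c \in build l s fr fr.+1 off) || (c \in build r fr t (fr.+1 + nser l) (off + nleaves l)).
  by move=> c cA Hc; have := node_interior HD cA Hc; rewrite /arcs /= mem_cat.
rewrite /uses /lchild /rchild /arcs /=.
apply/idP/idP => Hus.
- apply: (@walk_fwd (arcs (whole T)) _ _ (interior D') 1) => //.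
  + by move=> c cA Hc; apply: Hint => //; rewrite Hc.
  + move=> c /build_range [_ _ Hh]; rewrite /interior /=; lia.
  + by rewrite /interior /=; lia.
  + by case/andP: HA.
  + exact/eqP.
  + exact: Hus.
- apply: (@walk_bwd (arcs (whole T)) _ _ (interior D') 0) => //.
  + by move=> c cA Hc; rewrite orbC; apply: Hint => //; rewrite Hc orbT.
  + move=> c /build_range [_ Ht _]; rewrite /interior /=; lia.
  + by rewrite /interior /=; lia.
  + exact/eqP.
  + exact: Hus.
Qed.

End GraphPart.

Section NumPart.
Set Implicit Arguments. Unset Strict Implicit.

Lemma split_has (T : Type) (P : pred T) (s : seq T) : has P s ->
  exists s1 x s2, [/\ s = s1 ++ x :: s2, P x & ~~ has P s1].
Proof.
elim: s => //= y s IH; case Py: (P y) => /= H.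
  by exists [::], y, s.
have [s1 [x [s2 [-> Px Hs1]]]] := IH H.
by exists (y :: s1), x, s2; rewrite /= Py.
Qed.

Section Num.
Variable R : realFieldType.

Definition exc (x : R) (s : seq R) := \sum_(y <- s) Num.max (y - x) 0.
Definition cnt (x : R) (s : seq R) := count (fun y => x < y) s.
Definition HQ (C : R) (s : seq R) := forall h t n s3, s = h ++ t ++ n :: s3 ->
  \sum_(y <- t) (y - n) <= (size t)%:R * C.
Definition HR (C : R) (s : seq R) := forall s1 n t, s = s1 ++ n :: t ->
  \sum_(y <- t) (y - n) <= (size t)%:R * C.

Lemma HQ_cat C a s : HQ C (a ++ s) -> HQ C s.
Proof. by move=> H h t n s3 E; apply: (H (a ++ h)); rewrite E catA. Qed.
Lemma HR_cat C a s : HR C (a ++ s) -> HR C s.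
Proof. by move=> H s1 n t E; apply: (H (a ++ s1)); rewrite E catA. Qed.

Lemma exc_cat x s1 s2 : exc x (s1 ++ s2) = exc x s1 + exc x s2.
Proof. by rewrite /exc big_cat. Qed.
Lemma cnt_cat x s1 s2 : cnt x (s1 ++ s2) = (cnt x s1 + cnt x s2)%N.
Proof. by rewrite /cnt count_cat. Qed.

Lemma exc_all x s : all (fun y => x < y) s -> exc x s = \sum_(y <- s) (y - x).
Proof.
move=> /allP H; rewrite /exc big_seq [RHS]big_seq; apply: eq_bigr => y /H xy.
by apply/max_idPl; rewrite subr_ge0 ltW.
Qed.
Lemma cnt_all x s : all (fun y => x < y) s -> cnt x s = size s.
Proof. by rewrite all_count => /eqP. Qed.

Let pz (z : R * R) := z.1 + z.2.

Lemma key C (zs : seq (R * R)) x :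
  pairwise (fun a b => (b.1 <= a.1) && (a.2 <= b.2)) zs ->
  HQ C (map fst zs) -> HR C (map snd zs) ->
  has (fun z => pz z <= x) zs ->
  exc x (map pz zs) <= (cnt x (map pz zs))%:R * C.
Proof.
have [N] := ubnP (size zs); elim: N zs => // N IH [|z0 rest] //= Hsz Hpw HQz HRz Hhas.
move: Hpw => /andP [Hz0 Hpw].
have HQr : HQ C (map fst rest) by apply: (@HQ_cat C ([:: z0.1])).
have HRr : HR C (map snd rest) by apply: (@HR_cat C ([:: z0.2])).
case: (leP (pz z0) x) => Hz0x.
  have E1 : Num.max (pz z0 - x) 0 = 0 by apply/max_idPr; rewrite subr_le0.
  rewrite /exc /cnt big_cons /= E1 add0r add0n.
  case Hr: (has (fun z => pz z <= x) rest).
    by apply: IH.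
  have Hall : all (fun y => x < y) (map pz rest).
    rewrite all_map; apply/allP => y yin /=; rewrite ltNge; apply/negP => H.
    by move/negP: Hr; apply; apply/hasP; exists y.
  rewrite -/(exc x _) -/(cnt x _) exc_all // cnt_all // size_map.
  have H := HRz [::] z0.2 (map snd rest) erefl; rewrite size_map in H.
  apply: le_trans H.
  rewrite big_map big_map big_seq [X in _ <= X]big_seq; apply: ler_sum => y yin.
  move/allP: Hz0 => /(_ y yin) /andP [H1 H2]; rewrite /pz in Hz0x *; lra.
rewrite leNgt Hz0x /= in Hhas.
have Hh : has (fun z => pz z <= x) (z0 :: rest) by rewrite /= Hhas orbT.
have [s1 [n [s2 [E Pn Hs1]]]] := @split_has _ _ _ Hh.
have s1nil : s1 != [::].
  by apply/negP => /eqP s1n; move: E; rewrite s1n /= => -[e _]; move: Pn; rewrite -e leNgt Hz0x.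
have Hpw' : pairwise (fun a b => (b.1 <= a.1) && (a.2 <= b.2)) (s1 ++ n :: s2).
  by rewrite -E /= Hz0 Hpw.
move: (Hpw'); rewrite pairwise_cat => /and3P [Hrel _ Hpw2].
have Hall : all (fun y => x < y) (map pz s1).
  rewrite all_map; apply/allP => y yin /=; rewrite ltNge; apply/negP => H.
  by move/negP: Hs1; apply; apply/hasP; exists y.
have HQz' : HQ C (map fst (s1 ++ n :: s2)) by rewrite -E.
have HRz' : HR C (map snd (s1 ++ n :: s2)) by rewrite -E.
have -> : (true + cnt x (map pz rest))%N = cnt x (map pz (z0 :: rest)) by rewrite /cnt /= Hz0x.
have -> : pz z0 :: map pz rest = map pz (z0 :: rest) by [].
rewrite E map_cat exc_cat cnt_cat natrD mulrDl.
apply: lerD.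
  rewrite exc_all // cnt_all // size_map.
  have H := HQz' [::] (map fst s1) n.1 (map fst s2); rewrite map_cat /= in H.
  have {}H := H erefl; rewrite size_map in H; apply: le_trans H.
  rewrite big_map big_map big_seq [X in _ <= X]big_seq; apply: ler_sum => y yin.
  move/allrelP: Hrel => /(_ y n yin (mem_head _ _)) /andP [H1 H2]; rewrite /pz in Pn *; lra.
apply: IH => //.
- move: Hsz; rewrite -[(size rest).+1]/(size (z0 :: rest)) E size_cat /=; case: s1 s1nil {E Hs1 Hpw' Hrel Hall HQz' HRz'} => //= ? ? _; lia.
- by apply: (@HQ_cat C (map fst s1)); rewrite -map_cat.
- by apply: (@HR_cat C (map snd s1)); rewrite -map_cat.
- by rewrite /= Pn.
Qed.

Definition ge_rel := fun x y : R => y <= x.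
Lemma geR_trans : transitive ge_rel.
Proof. by move=> y x z H1 H2; rewrite /ge_rel (le_trans H2 H1). Qed.
Lemma geR_total : total ge_rel.
Proof. by move=> x y; rewrite /ge_rel le_total. Qed.

Lemma sum_const_seq (T : Type) (a : seq T) (c : R) :
  \sum_(x <- a) c = (size a)%:R * c.
Proof. by elim: a => [|y a IH]; rewrite ?big_nil ?big_cons ?IH ?mul0r //= mulrSr mulrDl mul1r addrC. Qed.

Lemma avg_le (a b : seq R) : allrel (fun x y => y <= x) a b ->
  (size a)%:R * \sum_(y <- b) y <= (size b)%:R * \sum_(x <- a) x.
Proof.
move=> /allrelP H.
have -> : (size a)%:R * \sum_(y <- b) y = \sum_(x <- a) \sum_(y <- b) y by rewrite sum_const_seq.
have -> : (size b)%:R * \sum_(x <- a) x = \sum_(x <- a) \sum_(y <- b) x.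
  by rewrite mulr_sumr; apply: eq_bigr => x _; rewrite sum_const_seq.
rewrite big_seq [X in _ <= X]big_seq; apply: ler_sum => x xa.
rewrite big_seq [X in _ <= X]big_seq; apply: ler_sum => y yb; exact: H.
Qed.

Lemma sum_take (L : seq R) i : (i <= size L)%N ->
  \sum_(j < i) L`_j = \sum_(y <- take i L) y.
Proof.
move=> Hi; rewrite (big_nth 0) big_mkord size_take_min (minn_idPl Hi).
by apply: eq_bigr => j _; rewrite nth_take.
Qed.

Definition balf (C : R) (L : seq R) := forall i : nat, (0 < i < size L)%N ->
    (i%:R)^-1 * (\sum_(j < i) L`_j) - L`_i <= C.

Lemma bal_HQ C L : sorted ge_rel L -> balf C L -> HQ C L.
Proof.
move=> Hs Hb h t n s3 E.
case: t E => [|y t'] E; first by rewrite big_nil mul0r.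
set t := y :: t' in E *.
have Hpw : pairwise ge_rel L by rewrite -(sorted_pairwise geR_trans).
move: Hpw; rewrite E catA pairwise_cat => /and3P [Hrel Hp1 _].
move: Hp1; rewrite pairwise_cat => /and3P [Hht _ _].
set i := size (h ++ t).
have ipos : (0 < i)%N by rewrite /i size_cat /t /=; lia.
have Hi : (0 < i < size L)%N by rewrite ipos E catA size_cat /= /i; lia.
have := Hb i Hi.
rewrite (@sum_take L i (ltnW (proj2 (andP Hi)))) E catA take_size_cat // nth_cat ltnn subnn /=.
set S := \sum_(y <- h ++ t) y => HS.
have ip : (0 : R) < i%:R by rewrite ltr0n.
have HS' : S - i%:R * n <= i%:R * C.
  have e : i%:R^-1 * S - n = (S - i%:R * n) / i%:R.
    by rewrite mulrBl mulrAC divff ?mul1r ?(mulrC _ S) // lt0r_neq0.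
  by move: HS; rewrite e ler_pdivrMr // [C * _]mulrC.
have Hav := @avg_le (map (fun y => y - n) h) (map (fun y => y - n) t).
have HA : allrel (fun x y : R => y <= x) (map (fun y => y - n) h) (map (fun y => y - n) t).
  rewrite allrel_mapl allrel_mapr; apply: sub_all Hht => a /allP Ha.
  by apply/allP => b /Ha; rewrite /ge_rel /= lerD2r.
have {}Hav := Hav HA; rewrite !size_map !big_map in Hav.
have eS : \sum_(y <- h ++ t) (y - n) = S - i%:R * n by rewrite sumrB sum_const_seq.
have hi : i%:R = (size h)%:R + (size t)%:R :> R by rewrite /i size_cat natrD.
rewrite -(ler_pM2l ip); apply: (le_trans (y := (size t)%:R * (S - i%:R * n))).
  have e2 : i%:R * \sum_(y <- t) (y - n) = (size h)%:R * \sum_(y <- t) (y - n) + (size t)%:R * \sum_(y <- t) (y - n) by rewrite hi mulrDl.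
  rewrite e2 -eS big_cat /= mulrDr lerD2r; exact: Hav.
rewrite mulrCA; apply: ler_wpM2l; first by rewrite ler0n.
exact: HS'.
Qed.


Lemma exc_le0 x s : all (fun y => y <= x) s -> exc x s = 0 /\ cnt x s = 0%N.
Proof.
move=> /allP H; split.
  rewrite /exc big_seq big1 // => y /H yx; apply/max_idPr; by rewrite subr_le0.
rewrite /cnt; apply/eqP; rewrite -leqn0 leqNgt -has_count; apply/hasP => -[y /H yx].
by rewrite ltNge yx.
Qed.

Lemma exc_allge x s : all (fun y => x <= y) s -> exc x s = \sum_(y <- s) (y - x).
Proof.
move=> /allP H; rewrite /exc big_seq [RHS]big_seq; apply: eq_bigr => y /H xy.
by apply/max_idPl; rewrite subr_ge0.
Qed.

Lemma HQ_exc C L x : sorted ge_rel L -> HQ C L -> has (fun y => y <= x) L ->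
  exc x L <= (cnt x L)%:R * C.
Proof.
move=> Hs HQL Hh; have [s1 [n [s2 [E Pn Hs1]]]] := @split_has _ _ _ Hh.
have Hpw : pairwise ge_rel L by rewrite -(sorted_pairwise geR_trans).
move: Hpw; rewrite E pairwise_cat => /and3P [Hrel _ /= /andP [Hn _]].
have Hall : all (fun y => x < y) s1.
  apply/allP => y yin /=; rewrite ltNge; apply/negP => H.
  by move/negP: Hs1; apply; apply/hasP; exists y.
have Hle : all (fun y => y <= x) (n :: s2).
  rewrite /= Pn /=; apply/allP => y /(allP Hn); rewrite /ge_rel => yn; exact: le_trans yn Pn.
have [e1 e2] := exc_le0 Hle.
rewrite exc_cat cnt_cat e1 e2 addr0 addn0 exc_all // cnt_all //.
apply: le_trans (HQL [::] s1 n s2 E).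
rewrite big_seq [X in _ <= X]big_seq; apply: ler_sum => y yin; rewrite lerD2l lerN2 //.
Qed.

Lemma exc_bal C s : 0 <= C ->
  (forall x, has (fun y => y <= x) s -> exc x s <= (cnt x s)%:R * C) ->
  balf C (sort ge_rel s).
Proof.
move=> C0 H i /andP [i0 isz].
set L := sort ge_rel s in isz *.
have Hperm : perm_eq L s by rewrite /L perm_sort.
set x := L`_i.
have xs : x \in s by rewrite -(perm_mem Hperm) mem_nth.
have Hx : exc x s <= (cnt x s)%:R * C by apply: H; apply/hasP; exists x => //.
rewrite /exc -(perm_big _ Hperm) -/(exc x L) /cnt -(permP Hperm) -/(cnt x L) in Hx.
have Hs : sorted ge_rel L by exact: (sort_sorted geR_total).
have EL : L = take i L ++ x :: drop i.+1 L by rewrite -(drop_nth 0 isz) cat_take_drop.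
have Hpw : pairwise ge_rel L by rewrite -(sorted_pairwise geR_trans).
move: Hpw; rewrite EL pairwise_cat => /and3P [Hrel _ /= /andP [Hn _]].
have Hge : all (fun y => x <= y) (take i L).
  by apply/allP => y yin; move/allrelP: Hrel => /(_ y x yin (mem_head _ _)).
have Hle : all (fun y => y <= x) (x :: drop i.+1 L).
  by rewrite /= lexx /=; apply/allP => y /(allP Hn).
have [e1 e2] := exc_le0 Hle.
rewrite EL exc_cat cnt_cat e1 e2 addr0 addn0 exc_allge // sumrB sum_const_seq in Hx.
have szt : size (take i L) = i by rewrite size_take isz.
rewrite szt in Hx.
have Hc : (cnt x (take i L))%:R * C <= i%:R * C.
  apply: ler_wpM2r => //; rewrite ler_nat /cnt; apply: leq_trans (count_size _ _) _; by rewrite szt.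
have HS := le_trans Hx Hc.
rewrite -EL (@sum_take L i (ltnW isz)).
have ip : (0 : R) < i%:R by rewrite ltr0n.
set S := \sum_(y <- take i L) y in HS *.
have e : i%:R^-1 * S - x = (S - i%:R * x) / i%:R.
  by rewrite mulrBl mulrAC divff ?mul1r ?(mulrC _ S) // lt0r_neq0.
by rewrite e ler_pdivrMr // [C * _]mulrC.
Qed.

End Num.

End NumPart.

Section MPart.
Set Implicit Arguments. Unset Strict Implicit.

Definition disj (p q : seq sparc) := ~~ has (fun a => a \in q) p.

Lemma uniq_flatten_pairwise (P : seq (seq sparc)) :
  uniq (flatten P) -> pairwise (fun p q => ~~ has (fun a => a \in q) p) P.
Proof.
elim: P => [//|p P IH] /=; rewrite cat_uniq => /and3P [_ Hd Hu].
rewrite IH // andbT; apply/allP => q qP; apply/hasPn => a ap; apply/negP => aq.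
have aF : a \in flatten P by apply/flattenP; exists q.
by move/hasPn: Hd => /(_ a aF); rewrite ap.
Qed.

Lemma profile_uniq_flatten G P : profile G P -> uniq (flatten P).
Proof.
move=> /andP [Hall Hpw]; elim: P Hall Hpw => [//|p P IH] /= /andP [Hp Hall] /andP [Hd Hpw].
rewrite cat_uniq (is_path_uniq Hp) IH // andbT.
apply/hasPn => a /flattenP [q qP aq]; apply/negP => ap.
by move/allP: Hd => /(_ q qP) /hasPn /(_ a ap); rewrite aq.
Qed.

Lemma profile_arcs G P : profile G P -> forall a, a \in flatten P -> a \in arcs G.
Proof.
move=> /andP [/allP Hall _] a /flattenP [p pP ap].
by have := is_path_arcs (Hall p pP) => /allP; apply.
Qed.

Lemma profile_uses G P : profile G P -> count (uses G) P = size P.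
Proof.
move=> /andP [/allP Hall _]; apply/eqP; rewrite -all_count; apply/allP => p pP.
have := Hall p pP; case: p {pP} => [//|a p] /and5P [_ _ _ /= /andP [aG _] _].
by rewrite /uses /= aG.
Qed.

Lemma mem_zip2 (S T : eqType) (s : seq S) (t : seq T) x y :
  (x, y) \in zip s t -> x \in s /\ y \in t.
Proof.
elim: s t => [|a s IH] [|b t] //=; rewrite inE => /orP [/eqP [-> ->]|/IH [H1 H2]].
  by split; apply: mem_head.
by split; [rewrite H1 orbT|rewrite in_cons H2 orbT].
Qed.

Lemma perm_flatten_zip (Q R : seq (seq sparc)) : size Q = size R ->
  perm_eq (flatten [seq x.1 ++ x.2 | x <- zip Q R]) (flatten Q ++ flatten R).
Proof.
elim: Q R => [|q Q IH] [|r R] //= [/IH H].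
rewrite -!catA perm_cat2l perm_sym perm_catCA perm_sym perm_cat2l; exact: H.

Qed.

Section Tau.
Variables (R : realFieldType) (tau : nat -> R).

Lemma tauP_cat G p q : tauP tau G (p ++ q) = tauP tau G p + tauP tau G q.
Proof. by rewrite /tauP big_cat. Qed.

Lemma tauP_out G p : (forall a, a \in p -> a \notin arcs G) -> tauP tau G p = 0.
Proof.
move=> H; rewrite /tauP big_seq_cond big1 // => a /andP [ap aG].
by move: (H a ap); rewrite aG.
Qed.

Lemma tauP_unused G p : ~~ uses G p -> tauP tau G p = 0.
Proof. by move=> /hasPn H; apply: tauP_out. Qed.

Lemma tauP_split D G1 G2 p : arcs D = arcs G1 ++ arcs G2 ->
  (forall a, a \in arcs G1 -> a \in arcs G2 -> False) ->
  tauP tau D p = tauP tau G1 p + tauP tau G2 p.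
Proof.
move=> HD Hd; rewrite /tauP !(big_mkcond (fun a => a \in _)) -big_split.
apply: eq_bigr => a _; rewrite HD mem_cat.
case E1: (a \in arcs G1); case E2: (a \in arcs G2) => //=; rewrite ?addr0 ?add0r //.
by case: (Hd a E1 E2).
Qed.

Lemma tauP_ge0 G p : (forall a, a \in arcs G -> 0 <= tau (arc_id a)) -> 0 <= tauP tau G p.
Proof. by move=> H; rewrite /tauP; apply: sumr_ge0 => a /H. Qed.

Lemma tauP_mono G G' p : {subset arcs G <= arcs G'} ->
  (forall a, a \in arcs G' -> 0 <= tau (arc_id a)) -> tauP tau G p <= tauP tau G' p.
Proof.
move=> sub H; rewrite /tauP !(big_mkcond (fun a => a \in _)); apply: ler_sum => a _.
case E1: (a \in arcs G); first by rewrite (sub _ E1).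
by case E2: (a \in arcs G') => //; apply: H.
Qed.

Lemma Cmax_cons G p Ps : Cmax tau G (p :: Ps) = Num.max (tauP tau G p) (Cmax tau G Ps).
Proof. by rewrite /Cmax big_cons. Qed.

Lemma Cmax_ge0 G Ps : 0 <= Cmax tau G Ps.
Proof.
elim: Ps => [|p Ps IH]; first by rewrite /Cmax big_nil.
by rewrite Cmax_cons le_max IH orbT.
Qed.

Lemma Cmax_ub G Ps p : p \in Ps -> tauP tau G p <= Cmax tau G Ps.
Proof.
elim: Ps => [//|q Ps IH]; rewrite in_cons Cmax_cons le_max => /orP [/eqP ->|/IH ->].
  by rewrite lexx.
by rewrite orbT.
Qed.

Lemma Cmax_mono G G' Ps : (forall p, tauP tau G p <= tauP tau G' p) ->
  Cmax tau G Ps <= Cmax tau G' Ps.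
Proof.
move=> H; elim: Ps => [|p Ps IH]; first by rewrite /Cmax !big_nil.
rewrite !Cmax_cons ge_max !le_max H /= IH !orbT //.
Qed.

Lemma theta_le G Ps : theta tau G Ps <= (count (uses G) Ps)%:R * Cmax tau G Ps.
Proof.
elim: Ps => [|p Ps IH]; first by rewrite /theta big_nil mul0r.
rewrite /theta big_cons -/(theta tau G Ps) /= natrD mulrDl.
have H1 : Cmax tau G Ps <= Cmax tau G (p :: Ps) by rewrite Cmax_cons le_max lexx orbT.
have H2 : theta tau G Ps <= (count (uses G) Ps)%:R * Cmax tau G (p :: Ps).
  by apply: le_trans IH _; apply: ler_wpM2l.
case U: (uses G p).
  by apply: lerD => //; rewrite mul1r Cmax_cons le_max lexx.
by rewrite tauP_unused ?U // mul0r !add0r.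
Qed.

End Tau.

Section Main.
Variables (R : realFieldType) (tau : nat -> R).

Lemma ge_anti : antisymmetric (@ge_rel R).
Proof. by move=> x y /andP [H1 H2]; apply: le_anti; rewrite /ge_rel in H1 H2; rewrite H1 H2. Qed.

Lemma sl_eq G P : profile G P -> sorted_lengths tau G P = sort (@ge_rel R) (map (tauP tau G) P).
Proof.
move=> HP; rewrite /sorted_lengths; congr (sort _ (map _ _)).
by apply/all_filterP; rewrite all_count profile_uses.
Qed.

Lemma bal_HQ_prof G Ps P L : profile G P -> balanced tau G Ps P ->
  sorted (@ge_rel R) L -> perm_eq L (map (tauP tau G) P) -> HQ (Cmax tau G Ps) L.
Proof.
move=> HP Hb Hs Hperm; apply: bal_HQ => //.
have E : sorted_lengths tau G P = L.
  rewrite sl_eq //; have <- : sort (@ge_rel R) L = sort (@ge_rel R) (map (tauP tau G) P).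
    by apply/(perm_sortP (@geR_total R) (@geR_trans R) ge_anti).

  exact: (sorted_sort (@geR_trans R) Hs).
by move: Hb; rewrite /balanced E.
Qed.

Lemma HQ_mono (C1 C : R) s : HQ C1 s -> C1 <= C -> HQ C s.
Proof.
move=> H le h t n s3 E; apply: le_trans (H h t n s3 E) _.
by apply: ler_wpM2l.
Qed.

End Main.

Lemma zip_map2 (A B C D : Type) (f : A -> C) (g : B -> D) s t :
  zip (map f s) (map g t) = map (fun x => (f x.1, g x.2)) (zip s t).
Proof. by elim: s t => [|a s IH] [|b t] //=; rewrite IH. Qed.

Lemma pairwise_zip (A B : Type) (r1 : rel A) (r2 : rel B) s t :
  pairwise r1 s -> pairwise r2 t -> pairwise (fun a b => r1 a.1 b.1 && r2 a.2 b.2) (zip s t).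
Proof.
elim: s t => [|a s IH] [|b t] //= /andP [Ha Hs] /andP [Hb Ht]; rewrite IH // andbT.
elim: s t {IH Hs Ht} Ha Hb => [|a' s IH] [|b' t] //= /andP [H1 H2] /andP [H3 H4].
by rewrite H1 H3 IH.
Qed.

Lemma uses_split D G1 G2 p : arcs D = arcs G1 ++ arcs G2 ->
  uses D p = uses G1 p || uses G2 p.
Proof. by move=> E; rewrite /uses -has_predU; apply: eq_has => a; rewrite /= E mem_cat. Qed.

Lemma HQrev_HR (R : realFieldType) (C : R) s : HQ C (rev s) -> HR C s.
Proof.
move=> H s1 n t E.
have := H [::] (rev t) n (rev s1); rewrite E rev_cat rev_cons cat_rcons /= => /(_ erefl).
by rewrite big_rev size_rev.
Qed.

Definition ser_gc (R : realFieldType) (tau : nat -> R) G1 G2 (Q Rr P : seq (seq sparc)) :=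
  size Q = size Rr /\
      exists Q' R', [/\ perm_eq Q Q', perm_eq Rr R',
        sorted (fun p q => tauP tau G1 q <= tauP tau G1 p) Q',
        sorted (fun p q => tauP tau G2 p <= tauP tau G2 q) R' &
        P = [seq x.1 ++ x.2 | x <- zip Q' R']].

Section MainS.
Variables (R : realFieldType) (tau : nat -> R).

Lemma main_ser D G1 G2 Ps Q Rr :
  arcs D = arcs G1 ++ arcs G2 -> (forall a, a \in arcs G1 -> a \in arcs G2 -> False) ->
  (forall a, a \in arcs D -> 0 <= tau (arc_id a)) ->
  sp_src G1 = sp_src D -> sp_snk G1 = sp_src G2 -> sp_snk G2 = sp_snk D ->
  (forall q r x, is_path (arcs G1) (sp_src G1) (sp_snk G1) q ->
     is_path (arcs G2) (sp_src G2) (sp_snk G2) r ->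
     x \in sp_src G1 :: map arc_head q -> x \in map arc_head r -> False) ->
  (forall p, p \in Ps -> uses G1 p = uses G2 p) ->
  profile G1 Q -> profile G2 Rr -> consistent tau G1 Ps Q -> consistent tau G2 Ps Rr ->
  balanced tau G1 Ps Q -> balanced tau G2 Ps Rr ->
  (exists P, ser_gc tau G1 G2 Q Rr P) /\
  (forall P, ser_gc tau G1 G2 Q Rr P ->
     [/\ profile D P, consistent tau D Ps P & balanced tau D Ps P]).
Proof.
move=> Hsplit Hdisj Hnn Hs1 Hm Ht2 Hvert Huses HQ HR [HQc1 HQc2] [HRc1 HRc2] HQb HRb.
have sizeQR : size Q = size Rr.
  by rewrite -(profile_uses HQ) -(profile_uses HR) HQc1 HRc1; apply: eq_in_count.
split.
  set lq := (fun p q => tauP tau G1 q <= tauP tau G1 p).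
  set lr := (fun p q => tauP tau G2 p <= tauP tau G2 q).
  have tq : total lq by move=> p q; exact: le_total.
  have tr : total lr by move=> p q; exact: le_total.
  exists [seq x.1 ++ x.2 | x <- zip (sort lq Q) (sort lr Rr)]; split => //.
  exists (sort lq Q), (sort lr Rr); split => //.
  - by rewrite perm_sym perm_sort.
  - by rewrite perm_sym perm_sort.
  - exact: (sort_sorted tq).
  - exact: (sort_sorted tr).
move=> P [_ [Q' [R' [pQ pR sQ sR EP]]]].
have szQ : size Q' = size R' by rewrite -(perm_size pQ) -(perm_size pR).
have Q'Q : forall q, q \in Q' -> q \in Q by move=> q; rewrite (perm_mem pQ).
have R'R : forall r, r \in R' -> r \in Rr by move=> r; rewrite (perm_mem pR).
have pathQ : forall q, q \in Q -> is_path (arcs G1) (sp_src G1) (sp_snk G1) q.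
  by case/andP: HQ => /allP.
have pathR : forall r, r \in Rr -> is_path (arcs G2) (sp_src G2) (sp_snk G2) r.
  by case/andP: HR => /allP.
have arcsQ : forall q a, q \in Q -> a \in q -> a \in arcs G1.
  by move=> q a /pathQ /is_path_arcs /allP; apply.
have arcsR : forall r a, r \in Rr -> a \in r -> a \in arcs G2.
  by move=> r a /pathR /is_path_arcs /allP; apply.
have tauq : forall q, q \in Q -> tauP tau D q = tauP tau G1 q.
  move=> q qQ; rewrite (tauP_split _ _ Hsplit Hdisj) (@tauP_out _ _ G2) ?addr0 // => a aq.
  by apply/negP => aG2; exact: Hdisj a (arcsQ q a qQ aq) aG2.
have taur : forall r, r \in Rr -> tauP tau D r = tauP tau G2 r.
  move=> r rR; rewrite (tauP_split _ _ Hsplit Hdisj) (@tauP_out _ _ G1) ?add0r // => a ar.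
  by apply/negP => aG1; exact: Hdisj a aG1 (arcsR r a rR ar).
have taupair : forall x, x \in zip Q' R' ->
    tauP tau D (x.1 ++ x.2) = tauP tau G1 x.1 + tauP tau G2 x.2.
  move=> [q r] /mem_zip2 [qQ rR] /=; rewrite tauP_cat tauq ?taur //; auto.
have HP : profile D P.
  apply/andP; split.
    rewrite EP; apply/allP => _ /mapP [[q r] xz ->] /=.
    have [qQ rR] := mem_zip2 xz.
    rewrite Hsplit -Hs1 -Ht2; apply: (@is_path_cat _ _ _ (sp_snk G1)).
    - exact: pathQ (Q'Q q qQ).
    - rewrite Hm; exact: pathR (R'R r rR).
    - move=> x H1 H2; exact: (Hvert q r x (pathQ _ (Q'Q _ qQ)) (pathR _ (R'R _ rR)) H1 H2).
  apply: uniq_flatten_pairwise; rewrite EP (perm_uniq (perm_flatten_zip szQ)) cat_uniq.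
  rewrite -(perm_uniq (perm_flatten pQ)) -(perm_uniq (perm_flatten pR)).
  rewrite (profile_uniq_flatten HQ) (profile_uniq_flatten HR) andbT /=.
  apply/hasPn => a aR; apply/negP => aQ.
  rewrite -(perm_mem (perm_flatten pQ)) in aQ; rewrite -(perm_mem (perm_flatten pR)) in aR.
  exact: Hdisj a (profile_arcs HQ aQ) (profile_arcs HR aR).
have sizeP : size P = size Q by rewrite EP size_map size_zip -szQ minnn (perm_size pQ).
have C1C : Cmax tau G1 Ps <= Cmax tau D Ps.
  apply: Cmax_mono => p; apply: tauP_mono => // a aG; rewrite Hsplit mem_cat aG.
  done.
have C2C : Cmax tau G2 Ps <= Cmax tau D Ps.
  apply: Cmax_mono => p; apply: tauP_mono => // a aG; rewrite Hsplit mem_cat aG.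
  by rewrite orbT.
split => //.
- split.
    rewrite (profile_uses HP) sizeP -(profile_uses HQ) HQc1.
    apply: eq_in_count => p pPs /=; rewrite (uses_split _ Hsplit) (Huses p pPs) orbb //.
  have ET : forall X, theta tau D X = theta tau G1 X + theta tau G2 X.
    by move=> X; rewrite /theta -big_split; apply: eq_bigr => p _; apply: tauP_split.
  rewrite (ET Ps).
  have -> : theta tau D P = theta tau G1 Q + theta tau G2 Rr.
    rewrite /theta EP big_map.
    have -> : \sum_(x <- zip Q' R') tauP tau D (x.1 ++ x.2) =
        \sum_(x <- zip Q' R') (tauP tau G1 x.1 + tauP tau G2 x.2).
      by rewrite big_seq [RHS]big_seq; apply: eq_bigr => x /taupair.
    rewrite big_split /=; congr (_ + _).
      transitivity (\sum_(q <- unzip1 (zip Q' R')) tauP tau G1 q); first by rewrite big_map.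
      by rewrite unzip1_zip ?szQ //; apply: perm_big; rewrite perm_sym.
    transitivity (\sum_(q <- unzip2 (zip Q' R')) tauP tau G2 q); first by rewrite big_map.
    by rewrite unzip2_zip ?szQ //; apply: perm_big; rewrite perm_sym.
  exact: lerD.
set qs := map (tauP tau G1) Q'; set rs := map (tauP tau G2) R'.
have EPs : map (tauP tau D) P = map (fun z => z.1 + z.2) (zip qs rs).
  rewrite EP /qs /rs zip_map2 -!map_comp; apply/eq_in_map => x xz /=; exact: taupair.
rewrite /balanced (sl_eq tau HP) EPs.
apply: exc_bal; first exact: Cmax_ge0.
move=> x Hx; apply: key.
- apply: (@pairwise_zip _ _ (@ge_rel R) <=%R).
    by rewrite -(sorted_pairwise (@geR_trans R)) /qs sorted_map.
  by rewrite -(sorted_pairwise le_trans) /rs sorted_map.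
- rewrite (_ : [seq i.1 | i <- zip qs rs] = qs); last by apply: unzip1_zip; rewrite !size_map szQ.
  apply: HQ_mono C1C; apply: (bal_HQ_prof HQ HQb).
    by rewrite /qs sorted_map.
  by rewrite /qs; apply: perm_map; rewrite perm_sym.
- rewrite (_ : [seq i.2 | i <- zip qs rs] = rs); last by apply: unzip2_zip; rewrite !size_map szQ.
  apply: HQrev_HR; apply: HQ_mono C2C.
  apply: (bal_HQ_prof HR HRb).
    by rewrite rev_sorted /rs sorted_map.
  by rewrite perm_rev /rs; apply: perm_map; rewrite perm_sym.
- by move: Hx; rewrite has_map.
Qed.

End MainS.

Section MainP.
Variables (R : realFieldType) (tau : nat -> R).

Lemma side_exc G Ps Q x (C : R) : profile G Q -> consistent tau G Ps Q -> balanced tau G Ps Q ->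
  Cmax tau G Ps <= C -> 0 <= x ->
  exc x (map (tauP tau G) Q) <= (cnt x (map (tauP tau G) Q))%:R * C.
Proof.
move=> HQpr [Hc1 Hc2] Hb C1C x0.
set qs := map (tauP tau G) Q.
have Hcnt0 : forall n : nat, (n%:R) * Cmax tau G Ps <= n%:R * C by move=> n; apply: ler_wpM2l.
case Hh: (has (fun y => y <= x) qs).
  set L := sort (@ge_rel R) qs.
  have pL : perm_eq L qs by rewrite /L perm_sort.
  have sL : sorted (@ge_rel R) L by exact: (sort_sorted (@geR_total R)).
  have HQL : HQ (Cmax tau G Ps) L by apply: (bal_HQ_prof HQpr Hb sL).
  have := HQ_exc sL HQL (x := x); rewrite (perm_has _ pL) Hh => /(_ isT).
  rewrite /exc (perm_big _ pL) /cnt (permP pL) => H.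
  exact: le_trans H (Hcnt0 _).
have Hall : all (fun y => x < y) qs.
  apply/allP => y yin /=; rewrite ltNge; apply/negP => H.
  by move/negP: Hh; apply; apply/hasP; exists y.
rewrite exc_all // cnt_all // /qs size_map.
apply: le_trans (Hcnt0 _).
apply: (@le_trans _ _ (theta tau G Q)).
  rewrite /theta -(big_map (tauP tau G) xpredT idfun) -/qs.
  by apply: ler_sum => y _; rewrite lerBlDr lerDl.
apply: le_trans Hc2 _; apply: le_trans (theta_le _ _ _) _.
by rewrite -Hc1 (profile_uses HQpr).
Qed.

Lemma main_par D G1 G2 Ps Q Rr :
  arcs D = arcs G1 ++ arcs G2 -> (forall a, a \in arcs G1 -> a \in arcs G2 -> False) ->
  (forall a, a \in arcs D -> 0 <= tau (arc_id a)) ->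
  sp_src G1 = sp_src D -> sp_snk G1 = sp_snk D ->
  sp_src G2 = sp_src D -> sp_snk G2 = sp_snk D ->
  (forall p, p \in Ps -> ~~ (uses G1 p && uses G2 p)) ->
  profile G1 Q -> profile G2 Rr -> consistent tau G1 Ps Q -> consistent tau G2 Ps Rr ->
  balanced tau G1 Ps Q -> balanced tau G2 Ps Rr ->
  (exists P, P = Q ++ Rr) /\
  (forall P, P = Q ++ Rr ->
     [/\ profile D P, consistent tau D Ps P & balanced tau D Ps P]).
Proof.
move=> Hsplit Hdisj Hnn Hs1 Ht1 Hs2 Ht2 Huses HQ HR HQc HRc HQb HRb.
split; first by exists (Q ++ Rr).
move=> P EP.
have pathQ : forall q, q \in Q -> is_path (arcs G1) (sp_src G1) (sp_snk G1) q.
  by case/andP: HQ => /allP.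
have pathR : forall r, r \in Rr -> is_path (arcs G2) (sp_src G2) (sp_snk G2) r.
  by case/andP: HR => /allP.
have arcsQ : forall q a, q \in Q -> a \in q -> a \in arcs G1.
  by move=> q a /pathQ /is_path_arcs /allP; apply.
have arcsR : forall r a, r \in Rr -> a \in r -> a \in arcs G2.
  by move=> r a /pathR /is_path_arcs /allP; apply.
have tauq : forall q, q \in Q -> tauP tau D q = tauP tau G1 q.
  move=> q qQ; rewrite (tauP_split _ _ Hsplit Hdisj) (@tauP_out _ _ G2) ?addr0 // => a aq.
  by apply/negP => aG2; exact: Hdisj a (arcsQ q a qQ aq) aG2.
have taur : forall r, r \in Rr -> tauP tau D r = tauP tau G2 r.
  move=> r rR; rewrite (tauP_split _ _ Hsplit Hdisj) (@tauP_out _ _ G1) ?add0r // => a ar.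
  by apply/negP => aG1; exact: Hdisj a aG1 (arcsR r a rR ar).
have HP : profile D P.
  rewrite EP; apply/andP; split.
    rewrite all_cat; apply/andP; split; apply/allP.
      move=> q /pathQ; rewrite Hs1 Ht1; apply: is_path_sub => a; rewrite Hsplit mem_cat => ->.
      done.
    move=> r /pathR; rewrite Hs2 Ht2; apply: is_path_sub => a; rewrite Hsplit mem_cat => ->.
    by rewrite orbT.
  apply: uniq_flatten_pairwise; rewrite flatten_cat cat_uniq.
  rewrite (profile_uniq_flatten HQ) (profile_uniq_flatten HR) andbT /=.
  apply/hasPn => a aR; apply/negP => aQ.
  exact: Hdisj a (profile_arcs HQ aQ) (profile_arcs HR aR).
have C1C : Cmax tau G1 Ps <= Cmax tau D Ps.
  apply: Cmax_mono => p; apply: tauP_mono => // a aG; rewrite Hsplit mem_cat aG.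
  done.
have C2C : Cmax tau G2 Ps <= Cmax tau D Ps.
  apply: Cmax_mono => p; apply: tauP_mono => // a aG; rewrite Hsplit mem_cat aG.
  by rewrite orbT.
case: HQc => [HQc1 HQc2]; case: HRc => [HRc1 HRc2].
split => //.
- split.
    rewrite (profile_uses HP) EP size_cat -(profile_uses HQ) -(profile_uses HR) HQc1 HRc1.
    rewrite -count_predUI.
    have -> : count (predI (uses G1) (uses G2)) Ps = 0%N.
      rewrite -(count_pred0 Ps); apply: eq_in_count => p pPs /=.
      by apply/negbTE; apply: Huses.
    rewrite addn0; apply: eq_in_count => p _ /=; by rewrite (uses_split _ Hsplit).
  have ET : forall X, theta tau D X = theta tau G1 X + theta tau G2 X.
    by move=> X; rewrite /theta -big_split; apply: eq_bigr => p _; apply: tauP_split.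
  rewrite (ET Ps).
  have -> : theta tau D P = theta tau G1 Q + theta tau G2 Rr.
    rewrite /theta EP big_cat /=; congr (_ + _).
      by rewrite big_seq [RHS]big_seq; apply: eq_bigr => q /tauq.
    by rewrite big_seq [RHS]big_seq; apply: eq_bigr => r /taur.
  exact: lerD.
rewrite /balanced (sl_eq tau HP).
apply: exc_bal; first exact: Cmax_ge0.
move=> x Hx.
have x0 : 0 <= x.
  move/hasP: Hx => [y /mapP [p _ ->]]; apply: le_trans; exact: tauP_ge0.
have -> : map (tauP tau D) P = map (tauP tau G1) Q ++ map (tauP tau G2) Rr.
  rewrite EP map_cat; congr (_ ++ _); apply/eq_in_map => p pin; [exact: tauq|exact: taur].
rewrite exc_cat cnt_cat natrD mulrDl; apply: lerD.
  exact: (side_exc HQ (conj HQc1 HQc2) HQb C1C x0).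
exact: (side_exc HR (conj HRc1 HRc2) HRb C2C x0).
Qed.

End MainP.

End MPart.


Theorem lemma7 (R : realFieldType) (T : sptree) (tau : nat -> R)
    (tau_ge0 : forall a : nat, (a < nleaves T)%N -> 0 <= tau a)
    (k : nat) (Ps : seq (seq sparc))
    (Hopt : optimal tau (whole T) k Ps)
    (D' : spg) (HD' : is_node (whole T) D') (Hnl : ~~ is_leaf D')
    (Q Rr : seq (seq sparc))
    (HQ : profile (lchild D') Q) (HR : profile (rchild D') Rr)
    (HQc : consistent tau (lchild D') Ps Q)
    (HRc : consistent tau (rchild D') Ps Rr)
    (HQb : balanced tau (lchild D') Ps Q)
    (HRb : balanced tau (rchild D') Ps Rr) :
  (exists P, greedy_comp tau D' Q Rr P) /\
  (forall P, greedy_comp tau D' Q Rr P ->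
     [/\ profile D' P, consistent tau D' Ps P & balanced tau D' Ps P]).
Proof.
have [H1 H2 H3 H4 H5] := node_inv HD'.
have Hnn : forall a, a \in arcs D' -> 0 <= tau (arc_id a).
  move=> a; rewrite /arcs => /build_range [Hi _ _]; apply: tau_ge0; lia.
have HPs : forall p, p \in Ps -> is_path (arcs (whole T)) 0 1 p.
  by case: Hopt => /andP [/allP HA _] _ _ p /HA.
case: D' HD' Hnl HQ HR HQc HRc HQb HRb H1 H2 H3 H4 H5 Hnn => [[|l r|l r] s t fr off] // HD' _
  HQ HR HQc HRc HQb HRb /= H1 H2 H3 H4 H5 Hnn.
- have Hdisj : forall a, a \in arcs (lchild (SPG (Ser l r) s t fr off)) ->
      a \in arcs (rchild (SPG (Ser l r) s t fr off)) -> False.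
    by move=> a; rewrite /arcs /= => /build_range [Hi1 _ _] /build_range [Hi2 _ _]; lia.
  have Hvert : forall q r0 x,
     is_path (arcs (lchild (SPG (Ser l r) s t fr off))) s fr q ->
     is_path (arcs (rchild (SPG (Ser l r) s t fr off))) fr t r0 ->
     x \in s :: map arc_head q -> x \in map arc_head r0 -> False.
    move=> q r0 x Hq Hr xq xr.
    have xfr : x != fr.
      case: r0 Hr xr => [//|b r0] /and5P [_ _ _ _ Hu] xr.
      by apply/negP => /eqP Ex; move: Hu; rewrite /= -Ex xr.
    move: xr => /mapP [c cr Ex].
    have := is_path_arcs Hr => /allP /(_ c cr); rewrite /arcs /= => /build_range [_ _ Hc].
    move: xq; rewrite in_cons => /orP [/eqP xs|/mapP [d dq Ed]].
      move/eqP: H3 xfr; lia.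
    have := is_path_arcs Hq => /allP /(_ d dq); rewrite /arcs /= => /build_range [_ _ Hd].
    move/eqP: H3 xfr; lia.
  have Huses : forall p, p \in Ps -> uses (lchild (SPG (Ser l r) s t fr off)) p =
      uses (rchild (SPG (Ser l r) s t fr off)) p.
    by move=> p /HPs; apply: ser_uses.
  have [E1 E2] := @main_ser R tau (SPG (Ser l r) s t fr off) (lchild (SPG (Ser l r) s t fr off))
    (rchild (SPG (Ser l r) s t fr off)) Ps Q Rr erefl Hdisj Hnn erefl erefl erefl Hvert Huses
    HQ HR HQc HRc HQb HRb.
  by split; [exact: E1|exact: E2].
- have Hdisj : forall a, a \in arcs (lchild (SPG (Par l r) s t fr off)) ->
      a \in arcs (rchild (SPG (Par l r) s t fr off)) -> False.
    by move=> a; rewrite /arcs /= => /build_range [Hi1 _ _] /build_range [Hi2 _ _]; lia.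
  have Huses : forall p, p \in Ps -> ~~ (uses (lchild (SPG (Par l r) s t fr off)) p &&
      uses (rchild (SPG (Par l r) s t fr off)) p).
    by move=> p /HPs; apply: par_uses.
  have [E1 E2] := @main_par R tau (SPG (Par l r) s t fr off) (lchild (SPG (Par l r) s t fr off))
    (rchild (SPG (Par l r) s t fr off)) Ps Q Rr erefl Hdisj Hnn erefl erefl erefl erefl Huses
    HQ HR HQc HRc HQb HRb.
  by split; [exact: E1|exact: E2].
Qed.
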